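(* Let $X$ be a countably infinite set and $W=\{0,1\}^X$. The Sum Preorder $\succeq_{SP}$ is the largest relation in the set of preorders on $W$ satisfying Strong Pareto and Permutation Invariance. That is, $\succeq_{SP}$ is a preorder on $W$ satisfying both axioms, and for every preorder $\succeq$ on $W$ satisfying both axioms and all $w,v\in W$, $w\succeq v$ implies $w\succeq_{SP} v$.
   Context: Worlds are functions $w:X\to\mathbb R$. For a preorder $\succeq$, $w\succ v$ means $w\succeq v$ and not $v\succeq w$. For a permutation $\pi$ of $X$, $\pi(w)(x)=w(\pi(x))$. Strong Pareto: for all $w,v\in W$, if $w(x)\ge v(x)$ for all $x$ and $w(x)>v(x)$ for some $x$, then $w\succ v$. Permutation Invariance: for all $w,v\in W$ and every permutation $\pi$ of $X$, $w\succeq v$ iff $\pi(w)\succeq\pi(v)$. A series $\sum_{x\in X}a_x$ converges unconditionally (diverges unconditionally to $+\infty$) if it converges to the same value (diverges to $+\infty$) under every enumeration of $X$. Sum Preorder: $w\succeq_{SP} v$ iff $\sum_{x\in X}(w(x)-v(x))$ converges unconditionally to some $r\ge 0$ or diverges unconditionally to $+\infty$. A relation $\succeq$ weakly extends $\succeq'$ if $w\succeq' v$ implies $w\succeq v$; a relation is the largest in a set $\mathcal R$ of relations if it belongs to $\mathcal R$ and weakly extends every member of $\mathcal R$. *)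

(* Defs.v *)
From Stdlib Require Import Reals.
Open Scope R_scope.

Definition bij {A B : Type} (f : A -> B) : Prop :=
  exists g : B -> A, (forall a, g (f a) = a) /\ (forall b, f (g b) = b).

Definition countably_infinite (X : Type) : Prop :=
  exists e : nat -> X, bij e.

Definition enumeration {X : Type} (e : nat -> X) : Prop := bij e.
Definition permutation {X : Type} (p : X -> X) : Prop := bij p.

Definition inW {X : Type} (w : X -> R) : Prop := forall x, w x = 0 \/ w x = 1.

Definition permw {X : Type} (p : X -> X) (w : X -> R) : X -> R := fun x => w (p x).

Definition psum {X : Type} (a : X -> R) (e : nat -> X) : nat -> R :=
  fun n => sum_f_R0 (fun k => a (e k)) n.

Definition uncond_conv_to {X : Type} (a : X -> R) (r : R) : Prop :=
  forall e : nat -> X, enumeration e -> Un_cv (psum a e) r.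

Definition uncond_div_pinfty {X : Type} (a : X -> R) : Prop :=
  forall e : nat -> X, enumeration e -> cv_infty (psum a e).

Definition sum_preorder {X : Type} (w v : X -> R) : Prop :=
  (exists r, 0 <= r /\ uncond_conv_to (fun x => w x - v x) r)
  \/ uncond_div_pinfty (fun x => w x - v x).

(* Relations on worlds; all properties below are relativized to W. *)
Definition rel (X : Type) := (X -> R) -> (X -> R) -> Prop.

Definition strict {X : Type} (ge : rel X) : rel X :=
  fun w v => ge w v /\ ~ ge v w.

Definition preorder_on_W {X : Type} (ge : rel X) : Prop :=
  (forall w, inW w -> ge w w) /\
  (forall u v w, inW u -> inW v -> inW w -> ge u v -> ge v w -> ge u w).

Definition strong_pareto {X : Type} (ge : rel X) : Prop :=
  forall w v, inW w -> inW v ->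
    (forall x, w x >= v x) -> (exists x, w x > v x) -> strict ge w v.

Definition permutation_invariance {X : Type} (ge : rel X) : Prop :=
  forall w v, inW w -> inW v -> forall p : X -> X, permutation p ->
    (ge w v <-> ge (permw p w) (permw p v)).

(* Main.v *)
Require Import Defs.
From Stdlib Require Import Reals Lra Lia Classical ClassicalEpsilon FunctionalExtensionality.
Open Scope R_scope.

Definition dec (P : Prop) : {P} + {~ P} := excluded_middle_informative P.
Definition ind (P : Prop) : R := if dec P then 1 else 0.

Fixpoint sumn (f : nat -> R) (n : nat) : R :=
  match n with O => 0 | S n => sumn f n + f n end.

Lemma sumn_ext f g n : (forall k, (k < n)%nat -> f k = g k) -> sumn f n = sumn g n.
Proof. induction n; simpl; intros H; auto. rewrite IHn by (intros; apply H; lia). rewrite H by lia. reflexivity. Qed.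

Lemma sumn_zero f n : (forall k, (k < n)%nat -> f k = 0) -> sumn f n = 0.
Proof. induction n; simpl; intros H; auto. rewrite IHn by (intros; apply H; lia). rewrite H by lia. lra. Qed.

Lemma sumn_single f n j : (j < n)%nat -> (forall k, k <> j -> f k = 0) -> sumn f n = f j.
Proof.
  induction n; intros Hj H; [lia|]. simpl. destruct (Nat.eq_dec j n).
  - subst. rewrite sumn_zero. lra. intros k Hk; apply H; lia.
  - rewrite IHn; [rewrite (H n) by auto; lra | lia | auto].
Qed.

Lemma sumn_plus f g n : sumn (fun k => f k + g k) n = sumn f n + sumn g n.
Proof. induction n; simpl; lra. Qed.

Lemma sumn_minus f g n : sumn (fun k => f k - g k) n = sumn f n - sumn g n.
Proof. induction n; simpl; lra. Qed.

Lemma sumn_exch (H : nat -> nat -> R) M n :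
  sumn (fun k => sumn (fun m => H m k) M) n = sumn (fun m => sumn (fun k => H m k) n) M.
Proof.
  induction n; simpl.
  - symmetry; apply sumn_zero; auto.
  - rewrite IHn. symmetry. apply (sumn_plus (fun m => sumn (fun k => H m k) n) (fun m => H m n)).
Qed.

Lemma sumn_nonneg f n : (forall k, 0 <= f k) -> 0 <= sumn f n.
Proof. intros H; induction n; simpl; [lra|]. specialize (H n); lra. Qed.

Lemma sumn_nonpos f n : (forall k, f k <= 0) -> sumn f n <= 0.
Proof. intros H; induction n; simpl; [lra|]. specialize (H n); lra. Qed.

Lemma sumn_mono f n m : (forall k, 0 <= f k) -> (n <= m)%nat -> sumn f n <= sumn f m.
Proof. intros H Hl; induction Hl; simpl; [lra|]. specialize (H m); lra. Qed.

Lemma sumn_antimono f n m : (forall k, f k <= 0) -> (n <= m)%nat -> sumn f m <= sumn f n.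
Proof. intros H Hl; induction Hl; simpl; [lra|]. specialize (H m); lra. Qed.

Lemma psum_sumn {X} (a : X -> R) e n : psum a e n = sumn (fun k => a (e k)) (S n).
Proof.
  unfold psum. induction n. simpl. lra.
  change (sum_f_R0 (fun k => a (e k)) (S n)) with (sum_f_R0 (fun k => a (e k)) n + a (e (S n))).
  rewrite IHn. reflexivity.
Qed.

Definition EZ {X} (f : X -> R) (e : nat -> X) := exists M, forall k, (M <= k)%nat -> f (e k) = 0.

Lemma bound_exists (h : nat -> nat) M : exists B, forall m, (m < M)%nat -> (h m < B)%nat.
Proof.
  induction M. exists 0%nat; intros; lia.
  destruct IHM as [B HB]. exists (Nat.max B (S (h M))). intros m Hm.
  assert (m < M \/ m = M)%nat as [H|H] by lia; [specialize (HB m H); lia | subst; lia].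
Qed.

Lemma F1 {X} (f : X -> R) e e' : bij e -> bij e' -> forall M,
  (forall k, (M <= k)%nat -> f (e k) = 0) ->
  exists N, forall n, (N <= n)%nat -> sumn (fun k => f (e' k)) n = sumn (fun k => f (e k)) M.
Proof.
  intros [g [Hg1 Hg2]] [g' [Hg1' Hg2']] M HM.
  set (Hf := fun m k => if dec (e m = e' k) then f (e m) else 0).
  assert (S1: forall k, f (e' k) = sumn (fun m => Hf m k) M).
  { intros k. destruct (Compare_dec.lt_dec (g (e' k)) M) as [Hl|Hl].
    - rewrite (sumn_single (fun m => Hf m k) M (g (e' k)) Hl).
      + unfold Hf. destruct (dec (e (g (e' k)) = e' k)) as [_|C]. rewrite Hg2. reflexivity. exfalso; apply C, Hg2.
      + intros m Hm. unfold Hf. destruct (dec (e m = e' k)) as [E|_]; [|reflexivity].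
        exfalso; apply Hm. rewrite <- E. symmetry; apply Hg1.
    - rewrite sumn_zero. rewrite <- (Hg2 (e' k)). apply HM. lia.
      intros m Hm. unfold Hf. destruct (dec (e m = e' k)) as [E|_]; [|reflexivity].
      exfalso. apply Hl. rewrite <- E, Hg1. exact Hm. }
  destruct (bound_exists (fun m => g' (e m)) M) as [B HB].
  exists B. intros n Hn.
  rewrite (sumn_ext _ (fun k => sumn (fun m => Hf m k) M)) by (intros; apply S1).
  rewrite sumn_exch. apply sumn_ext. intros m Hm.
  rewrite (sumn_single (fun k => Hf m k) n (g' (e m))).
  - unfold Hf. rewrite Hg2'. destruct (dec (e m = e m)); [reflexivity| congruence].
  - specialize (HB m Hm). simpl in HB. lia.
  - intros k Hk. unfold Hf. destruct (dec (e m = e' k)) as [E|_]; [|reflexivity].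
    exfalso; apply Hk. rewrite E. symmetry. apply Hg1'.
Qed.

Lemma EZ_transfer {X} (f : X -> R) e e' : bij e -> bij e' -> EZ f e -> EZ f e'.
Proof.
  intros He He' [M HM]. destruct (F1 f e e' He He' M HM) as [N HN].
  exists N. intros k Hk.
  assert (E: sumn (fun k0 => f (e' k0)) (S k) = sumn (fun k0 => f (e' k0)) k + f (e' k)) by reflexivity.
  rewrite (HN (S k)) in E by lia. rewrite (HN k) in E by lia. lra.
Qed.

Lemma div01 (h : nat -> R) : (forall k, h k = 0 \/ h k = 1) ->
  ~ (exists M, forall k, (M <= k)%nat -> h k = 0) ->
  forall K, exists N, forall n, (N <= n)%nat -> K < sumn h n.
Proof.
  intros H01 HnE.
  assert (Hpos : forall k, 0 <= h k) by (intros k; destruct (H01 k); lra).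
  assert (Hj : forall j : nat, exists N, forall n, (N <= n)%nat -> INR j <= sumn h n).
  { induction j.
    - exists 0%nat; intros; simpl; apply sumn_nonneg; auto.
    - destruct IHj as [N HN].
      assert (exists k, (N <= k)%nat /\ h k = 1) as [k [Hk1 Hk2]].
      { apply NNPP; intro C; apply HnE; exists N; intros k Hk; destruct (H01 k); auto.
        exfalso; apply C; eauto. }
      exists (S k). intros n Hn. rewrite S_INR.
      assert (sumn h (S k) <= sumn h n) by (apply sumn_mono; auto).
      assert (sumn h (S k) = sumn h k + h k) by reflexivity.
      specialize (HN k Hk1). lra. }
  intros K. destruct (INR_archimed 1 K) as [j Hj1]; [lra|].
  destruct (Hj j) as [N HN]. exists N. intros n Hn. specialize (HN n Hn). lra.
Qed.

Lemma G {X} (e0 : nat -> X) (d dA dB : X -> R) (K : R) : bij e0 ->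
  (forall x, d x = dA x - dB x) ->
  (forall x, dA x = 0 \/ dA x = 1) -> (forall x, dB x = 0 \/ dB x = 1) ->
  (forall N, sumn (fun k => dB (e0 k)) N <= K) ->
  (exists N0, K <= sumn (fun k => dA (e0 k)) N0) ->
  (exists r, 0 <= r /\ uncond_conv_to d r) \/ uncond_div_pinfty d.
Proof.
  intros He0 hd hA hB HBK [N0 HAK].
  assert (hApos : forall x, 0 <= dA x) by (intros x; destruct (hA x); lra).
  assert (EZB : EZ dB e0).
  { apply NNPP; intro C. destruct (div01 (fun k => dB (e0 k)) (fun k => hB (e0 k)) C K) as [N HN].
    specialize (HN N (le_n _)). specialize (HBK N). lra. }
  destruct (classic (EZ dA e0)) as [EZA | nEZA].
  - left. destruct EZA as [MA HA], EZB as [MB HB].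
    set (M := Nat.max (Nat.max MA MB) N0).
    exists (sumn (fun k => d (e0 k)) M). split.
    + rewrite (sumn_ext _ (fun k => dA (e0 k) - dB (e0 k))) by (intros; apply hd).
      rewrite sumn_minus.
      assert (sumn (fun k => dA (e0 k)) N0 <= sumn (fun k => dA (e0 k)) M) by (apply sumn_mono; [auto| unfold M; lia]).
      specialize (HBK M). lra.
    + intros e He.
      destruct (F1 d e0 e He0 He M) as [N HN].
      { intros k Hk. rewrite hd, HA, HB by (unfold M in Hk; lia). lra. }
      intros eps Heps. exists N. intros n Hn. rewrite psum_sumn. rewrite HN by lia.
      unfold Rdist. replace (_ - _) with 0 by ring. rewrite Rabs_R0. lra.
  - right. intros e He. destruct EZB as [MB HB].
    destruct (F1 dB e0 e He0 He MB HB) as [N HN].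
    assert (nEZ : ~ EZ dA e) by (intro C; apply nEZA; exact (EZ_transfer dA e e0 He He0 C)).
    intros Mx.
    destruct (div01 (fun k => dA (e k)) (fun k => hA (e k)) nEZ (Mx + sumn (fun k => dB (e0 k)) MB)) as [N1 HN1].
    exists (Nat.max N N1). intros n Hn. rewrite psum_sumn.
    rewrite (sumn_ext _ (fun k => dA (e k) - dB (e k))) by (intros; apply hd).
    rewrite sumn_minus. rewrite HN by lia. specialize (HN1 (S n) ltac:(lia)). lra.
Qed.

Definition pmap {X} (inA inB : X -> Prop) (rA rB : X -> nat) (x : X) : X :=
  if dec (inA x) then epsilon (inhabits x) (fun y => inB y /\ rB y = S (rA x))
  else if dec (inB x /\ exists y, inA y /\ S (rA y) = rB x)
       then epsilon (inhabits x) (fun y => inA y /\ S (rA y) = rB x) else x.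

Lemma constr {X} (inA inB : X -> Prop) (rA rB : X -> nat) :
  (forall x, inA x -> inB x -> False) ->
  (forall x y, inA x -> inA y -> rA x = rA y -> x = y) ->
  (forall x y, inB x -> inB y -> rB x = rB y -> x = y) ->
  (forall x, inA x -> exists y, inB y /\ rB y = S (rA x)) ->
  (exists b, inB b /\ rB b = 0%nat) ->
  exists p : X -> X, bij p /\ (forall x, inA x -> inB (p x)) /\
    (forall x, inB x -> inA (p x) \/ p x = x) /\ (forall x, ~ inA x -> ~ inB x -> p x = x) /\
    (exists b, inB b /\ p b = b).
Proof.
  intros disj uA uB hyp [b [Hb1 Hb2]].
  set (p := pmap inA inB rA rB).
  assert (pA : forall x, inA x -> inB (p x) /\ rB (p x) = S (rA x)).
  { intros x Hx. unfold p, pmap. destruct (dec (inA x)); [|contradiction].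
    apply epsilon_spec. auto. }
  assert (pB : forall x, ~ inA x -> inB x -> (exists y, inA y /\ S (rA y) = rB x) ->
            inA (p x) /\ S (rA (p x)) = rB x).
  { intros x H1 H2 H3. unfold p, pmap. destruct (dec (inA x)); [contradiction|].
    destruct (dec (inB x /\ exists y, inA y /\ S (rA y) = rB x)) as [_|C]; [|tauto].
    apply epsilon_spec. auto. }
  assert (pE : forall x, ~ inA x -> ~ (inB x /\ exists y, inA y /\ S (rA y) = rB x) -> p x = x).
  { intros x H1 H2. unfold p, pmap. destruct (dec (inA x)); [contradiction|].
    destruct (dec (inB x /\ exists y, inA y /\ S (rA y) = rB x)); [contradiction|reflexivity]. }
  assert (inv : forall x, p (p x) = x).
  { intros x. destruct (classic (inA x)) as [HA|nA].
    - destruct (pA x HA) as [H1 H2].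
      destruct (pB (p x)) as [H3 H4]; auto.
      + intro C; exact (disj _ C H1).
      + exists x; auto.
      + apply uA; auto. rewrite H2 in H4. congruence.
    - destruct (classic (inB x /\ exists y, inA y /\ S (rA y) = rB x)) as [[HB Hy]|nB].
      + destruct (pB x nA HB Hy) as [H1 H2]. destruct (pA (p x) H1) as [H3 H4].
        apply uB; auto. congruence.
      + rewrite (pE x nA nB). apply pE; auto. }
  exists p. split; [exists p; split; auto|]. split; [|split; [|split]].
  - intros x Hx; apply pA; auto.
  - intros x Hx. assert (nA : ~ inA x) by (intro C; exact (disj _ C Hx)).
    destruct (classic (exists y, inA y /\ S (rA y) = rB x)) as [Hy|nY].
    + left; apply pB; auto.
    + right; apply pE; tauto.
  - intros x H1 H2; apply pE; tauto.
  - exists b. split; auto. apply pE.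
    + intro C; exact (disj _ C Hb1).
    + intros [_ [y [_ Hy]]]. lia.
Qed.

Fixpoint cnt (P : nat -> Prop) (n : nat) : nat :=
  match n with O => O | S n => (cnt P n + if dec (P n) then 1 else 0)%nat end.

Lemma cnt_mono P n m : (n <= m)%nat -> (cnt P n <= cnt P m)%nat.
Proof. intros H; induction H; simpl; [lia|]. destruct (dec (P m)); lia. Qed.

Lemma rank_exists P j : (exists N, (j < cnt P N)%nat) -> exists m, P m /\ cnt P m = j.
Proof.
  intros [N HN]. induction N; simpl in HN; [lia|].
  destruct (Compare_dec.lt_dec j (cnt P N)) as [H|H]; [auto|].
  destruct (dec (P N)) as [HP|HP]; [|lia]. exists N; split; auto; lia.
Qed.

Lemma rank_unique P m m' : P m -> P m' -> cnt P m = cnt P m' -> m = m'.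
Proof.
  intros H1 H2 E. destruct (Nat.lt_trichotomy m m') as [L|[L|L]]; auto.
  - assert (cnt P (S m) <= cnt P m')%nat by (apply cnt_mono; lia).
    simpl in H. destruct (dec (P m)); [lia|contradiction].
  - assert (cnt P (S m') <= cnt P m)%nat by (apply cnt_mono; lia).
    simpl in H. destruct (dec (P m')); [lia|contradiction].
Qed.

Lemma sumn_ind_cnt P N : sumn (fun k => ind (P k)) N = INR (cnt P N).
Proof.
  induction N; simpl; [reflexivity|]. rewrite plus_INR, IHN. unfold ind.
  destruct (dec (P N)); simpl; lra.
Qed.

Lemma conv_inf a b l : Un_cv a l -> cv_infty b -> cv_infty (fun n => a n + b n).
Proof.
  intros Ha Hb M. destruct (Ha 1 Rlt_0_1) as [N1 HN1]. destruct (Hb (M - l + 1)) as [N2 HN2].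
  exists (Nat.max N1 N2). intros n Hn. specialize (HN1 n ltac:(lia)); specialize (HN2 n ltac:(lia)).
  unfold Rdist in HN1; apply Rabs_def2 in HN1. lra.
Qed.

Lemma inf_inf a b : cv_infty a -> cv_infty b -> cv_infty (fun n => a n + b n).
Proof.
  intros Ha Hb M. destruct (Ha 0) as [N1 HN1]. destruct (Hb M) as [N2 HN2].
  exists (Nat.max N1 N2). intros n Hn. specialize (HN1 n ltac:(lia)); specialize (HN2 n ltac:(lia)). lra.
Qed.

Lemma bij_comp {X} (p : X -> X) (e : nat -> X) : bij p -> bij e -> bij (fun n => p (e n)).
Proof.
  intros [q [Hq1 Hq2]] [g [Hg1 Hg2]]. exists (fun x => g (q x)).
  split; intros; [rewrite Hq1, Hg1 | rewrite Hg2, Hq2]; reflexivity.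
Qed.

Theorem proposition2 (X : Type) (hX : countably_infinite X) :
  (preorder_on_W (@sum_preorder X) /\ strong_pareto (@sum_preorder X) /\ permutation_invariance (@sum_preorder X))
  /\
  (forall ge : rel X,
     preorder_on_W ge -> strong_pareto ge -> permutation_invariance ge ->
     forall w v, inW w -> inW v -> ge w v -> sum_preorder w v).
Proof.
  destruct hX as [e0 He0].
  split; [split; [split|split]|].
  -
    intros w Hw. left. exists 0. split; [lra|]. intros e He eps Heps. exists 0%nat. intros n Hn.
    rewrite psum_sumn, sumn_zero by (intros; ring). unfold Rdist.
    replace (0 - 0) with 0 by ring. rewrite Rabs_R0. lra.
  -
    intros u v w _ _ _ H1 H2.
    assert (E : forall e, psum (fun x => u x - w x) e =
               (fun n => psum (fun x => u x - v x) e n + psum (fun x => v x - w x) e n)).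
    { intros e. extensionality n. unfold psum. rewrite <- sum_plus. apply sum_eq; intros; ring. }
    destruct H1 as [[r1 [Hr1 Hc1]]|Hd1]; destruct H2 as [[r2 [Hr2 Hc2]]|Hd2].
    + left. exists (r1 + r2). split; [lra|]. intros e He. rewrite E. apply CV_plus; auto.
    + right. intros e He. rewrite E. apply conv_inf with r1; auto.
    + right. intros e He. rewrite E.
      assert (E2 : (fun n => psum (fun x => u x - v x) e n + psum (fun x => v x - w x) e n) =
                  (fun n => psum (fun x => v x - w x) e n + psum (fun x => u x - v x) e n))
        by (extensionality n; ring).
      rewrite E2. apply conv_inf with r2; auto.
    + right. intros e He. rewrite E. apply inf_inf; auto.
  -
    intros w v Hw Hv Hge [x0 Hx0]. split.
    + apply (G e0 (fun x => w x - v x) (fun x => w x - v x) (fun _ => 0) 0 He0).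
      * intros; ring.
      * intros x. specialize (Hge x). destruct (Hw x); destruct (Hv x); first [left; lra | right; lra].
      * intros; left; reflexivity.
      * intros N. rewrite sumn_zero by auto. lra.
      * exists 0%nat. simpl. lra.
    + intro C. pose proof He0 as [g0 [Hg1 Hg2]].
      assert (Hneg : forall k, v (e0 k) - w (e0 k) <= 0).
      { intros k. specialize (Hge (e0 k)). lra. }
      assert (Hval : v x0 - w x0 = -1).
      { destruct (Hw x0); destruct (Hv x0); lra. }
      assert (Hle : forall n, (g0 x0 <= n)%nat -> psum (fun x => v x - w x) e0 n <= -1).
      { intros n Hn. rewrite psum_sumn.
        assert (sumn (fun k => v (e0 k) - w (e0 k)) (S n) <= sumn (fun k => v (e0 k) - w (e0 k)) (S (g0 x0)))
          by (apply sumn_antimono; auto; lia).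
        assert (sumn (fun k => v (e0 k) - w (e0 k)) (S (g0 x0)) =
                sumn (fun k => v (e0 k) - w (e0 k)) (g0 x0) + (v (e0 (g0 x0)) - w (e0 (g0 x0)))) by reflexivity.
        rewrite Hg2 in H0.
        assert (sumn (fun k => v (e0 k) - w (e0 k)) (g0 x0) <= 0) by (apply sumn_nonpos; auto).
        lra. }
      assert (Hle0 : forall n, psum (fun x => v x - w x) e0 n <= 0).
      { intros n. rewrite psum_sumn. apply sumn_nonpos; auto. }
      destruct C as [[r [Hr Hc]]|Hd].
      * destruct (Hc e0 He0 1 Rlt_0_1) as [N HN].
        specialize (HN (Nat.max N (g0 x0)) ltac:(lia)). specialize (Hle (Nat.max N (g0 x0)) ltac:(lia)).
        unfold Rdist in HN; apply Rabs_def2 in HN. lra.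
      * destruct (Hd e0 He0 0) as [N HN]. specialize (HN N (le_n _)). specialize (Hle0 N). lra.
  -
    intros w v Hw Hv p Hp. pose proof Hp as [q [Hqp Hpq]].
    assert (Hq : bij q) by (exists p; split; auto).
    split; intros H.
    + destruct H as [[r [Hr Hc]]|Hd].
      * left. exists r. split; auto. intros e He. exact (Hc _ (bij_comp p e Hp He)).
      * right. intros e He. exact (Hd _ (bij_comp p e Hp He)).
    + assert (Eq : forall e, psum (fun x => permw p w x - permw p v x) (fun n => q (e n)) =
                             psum (fun x => w x - v x) e).
      { intros e. extensionality n. unfold psum, permw. apply sum_eq; intros. rewrite !Hpq. reflexivity. }
      destruct H as [[r [Hr Hc]]|Hd].
      * left. exists r. split; auto. intros e He. rewrite <- Eq. exact (Hc _ (bij_comp q e Hq He)).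
      * right. intros e He. rewrite <- Eq. exact (Hd _ (bij_comp q e Hq He)).
  -
    intros ge [Hrefl Htrans] HP HPI w v Hw Hv Hge. apply NNPP; intro nSP.
    pose proof He0 as [g0 [Hg1 Hg2]].
    set (inA := fun x => w x = 1 /\ v x = 0). set (inB := fun x => w x = 0 /\ v x = 1).
    assert (hd : forall x, w x - v x = ind (inA x) - ind (inB x)).
    { intros x. unfold ind, inA, inB.
      destruct (Hw x) as [E1|E1]; destruct (Hv x) as [E2|E2];
      destruct (dec (w x = 1 /\ v x = 0)) as [[a1 a2]|n1];
      destruct (dec (w x = 0 /\ v x = 1)) as [[b1 b2]|n2]; try lra;
      first [ exfalso; apply n1; split; assumption | exfalso; apply n2; split; assumption ]. }
    assert (h01 : forall P, ind P = 0 \/ ind P = 1) by (intros; unfold ind; destruct dec; auto).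
    set (cA := cnt (fun k => inA (e0 k))). set (cB := cnt (fun k => inB (e0 k))).
    destruct (classic (exists N, (0 < cB N)%nat)) as [h0|nh0].
    2: { apply nSP. unfold sum_preorder.
         apply (G e0 _ (fun x => ind (inA x)) (fun x => ind (inB x)) 0 He0 hd (fun x => h01 _) (fun x => h01 _)).
         - intros N. replace (sumn _ N) with (INR (cB N)) by (symmetry; apply sumn_ind_cnt).
           assert (cB N = 0)%nat by (destruct (cB N) eqn:?; auto; exfalso; apply nh0; exists N; lia).
           rewrite H. simpl. lra.
         - exists 0%nat. simpl. lra. }
    destruct (classic (forall n, inA (e0 n) -> exists N, (S (cA n) < cB N)%nat)) as [h1|nh1].
    2: { apply not_all_ex_not in nh1 as [n Hn]. apply imply_to_and in Hn as [HAn HnN].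
         apply nSP. unfold sum_preorder.
         apply (G e0 _ (fun x => ind (inA x)) (fun x => ind (inB x)) (INR (S (cA n))) He0 hd (fun x => h01 _) (fun x => h01 _)).
         - intros N. replace (sumn _ N) with (INR (cB N)) by (symmetry; apply sumn_ind_cnt).
           apply le_INR. destruct (Nat.le_gt_cases (cB N) (S (cA n))); auto.
           exfalso; apply HnN; exists N; auto.
         - exists (S n). replace (sumn _ (S n)) with (INR (cA (S n))) by (symmetry; apply sumn_ind_cnt).
           assert (cA (S n) = S (cA n)) by (unfold cA; simpl; destruct (dec (inA (e0 n))); [lia|contradiction]).
           rewrite H. lra. }
    set (rA := fun x => cA (g0 x)). set (rB := fun x => cB (g0 x)).
    destruct (constr inA inB rA rB) as [p [Hp [P1 [P2 [P3 [b [Hb1 Hb2]]]]]]].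
    + intros x [a1 a2] [b1 b2]. lra.
    + intros x y Hx Hy E.
      assert (g0 x = g0 y).
      { apply (rank_unique (fun k => inA (e0 k))); cbv beta; [rewrite Hg2 | rewrite Hg2 | exact E]; auto. }
      rewrite <- (Hg2 x), H, Hg2. reflexivity.
    + intros x y Hx Hy E.
      assert (g0 x = g0 y).
      { apply (rank_unique (fun k => inB (e0 k))); cbv beta; [rewrite Hg2 | rewrite Hg2 | exact E]; auto. }
      rewrite <- (Hg2 x), H, Hg2. reflexivity.
    + intros x Hx. destruct (h1 (g0 x)) as [N HN]. { rewrite Hg2; exact Hx. }
      destruct (rank_exists (fun k => inB (e0 k)) (S (cA (g0 x)))) as [m [Hm1 Hm2]].
      { exists N; exact HN. }
      exists (e0 m). split; auto. unfold rB. rewrite Hg1. exact Hm2.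
    + destruct (rank_exists (fun k => inB (e0 k)) 0) as [m [Hm1 Hm2]]; [exact h0|].
      exists (e0 m). split; auto. unfold rB. rewrite Hg1. exact Hm2.
    + assert (Hw' : inW (permw p w)) by (intros x; apply Hw).
      assert (Hv' : inW (permw p v)) by (intros x; apply Hv).
      assert (PW : forall x, v x >= w (p x) /\ v (p x) >= w x).
      { intros x. destruct (Hw x) as [E1|E1]; destruct (Hv x) as [E2|E2].
        - rewrite P3; [lra| unfold inA; intros [? ?]; lra | unfold inB; intros [? ?]; lra].
        - assert (HB : inB x) by (split; auto).
          destruct (P2 x HB) as [HA'|E3]; [destruct HA'; lra | rewrite E3; lra].
        - assert (HA : inA x) by (split; auto). destruct (P1 x HA). lra.
        - rewrite P3; [lra| unfold inA; intros [? ?]; lra | unfold inB; intros [? ?]; lra]. }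
      assert (H1 : ge (permw p w) (permw p v)) by (apply (HPI w v Hw Hv p Hp); exact Hge).
      assert (H2 : strict ge v (permw p w)).
      { apply HP; auto. intros x; apply PW. exists b. unfold permw. rewrite Hb2. destruct Hb1; lra. }
      assert (H3 : strict ge (permw p v) w).
      { apply HP; auto. intros x; apply PW. exists b. unfold permw. rewrite Hb2. destruct Hb1; lra. }
      apply (proj2 H2). apply (Htrans _ w); auto. apply (Htrans _ (permw p v)); auto. exact (proj1 H3).
Qed.
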